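(* Let $R$ be a Dedekind domain with $\operatorname{char}(R)\neq3$ and fraction field $K$, and $\mathfrak a$ a fractional ideal of $R$. Let $f\in V_{\mathfrak a}$ with $\operatorname{disc}(f)\ne0$, and let $(S,I,\delta,s)$ be an $\mathfrak a$-balanced quadruple whose image under $\Phi_{\mathfrak a}$ is the $\mathrm{SL}(R\oplus\mathfrak a)$-orbit of $f$. Then $f$ has a zero $(x_0,y_0)\in K^2\setminus\{(0,0)\}$ if and only if $\delta=\gamma^3$ for some $\gamma\in(S\otimes_RK)^\times$.
   Context: $V_{\mathfrak a}=\{ax^3+3bx^2y+3cxy^2+dy^3: a\in\mathfrak a,b\in R,c\in\mathfrak a^{-1},d\in\mathfrak a^{-2}\}$, $\operatorname{disc}(f)=-3b^2c^2+4ac^3+4b^3d+a^2d^2-6abcd$; $\mathrm{SL}(R\oplus\mathfrak a)$ is the group of determinant-one matrices $\begin{pmatrix} r&x\\ y&s\end{pmatrix}$ with $r,s\in R$, $x\in\mathfrak a$, $y\in\mathfrak a^{-1}$, acting by $(g\cdot f)(x,y)=\det(g)^{-1}f((x,y)g)$. A quadratic $R$-algebra is a commutative $R$-algebra that is a rank-2 finitely generated torsion-free $R$-module; $N=N_{S\otimes K/K}$. An $\mathfrak a$-orientation is an isomorphism $\pi:\bigwedge^2S\to\mathfrak a$, equivalently a $\xi$ with $S=R+\mathfrak a\xi$ and $\pi_K(1\wedge\xi)=1$. An $\mathfrak a$-balanced quadruple: $S$ a nondegenerate (nonzero discriminant) $\mathfrak a$-oriented quadratic $R$-algebra, $I$ a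 fractional ideal of $S$, $\delta\in(S\otimes K)^\times$, $s\in K^\times$, with $I^3\subset\delta S$, $[S:I]_R=sR$ (module index) and $s^3=N(\delta)$. $\Phi_{\mathfrak a}(S,I,\delta,s)$ is the orbit of $C(x,y)=\pi_K(1\wedge(\alpha x+\beta y)^3\delta^{-1})$ for any decomposition $I=R\alpha+\mathfrak a\beta$ with $\pi_K(\alpha\wedge\beta)=s$. *)

(* Defs.v *)
From HB Require Import structures.
From mathcomp Require Import all_boot all_order all_algebra.
From mathcomp Require Import mpoly.
Set Implicit Arguments. Unset Strict Implicit. Unset Printing Implicit Defensive.
Import Order.TTheory GRing.Theory Num.Theory.
Local Open Scope ring_scope.

Section Defs.
Variable K : fieldType.
(* The Dedekind domain R is given as a subring of its fraction field K. *)
Variable R : K -> Prop.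

Definition is_subring : Prop :=
  [/\ R 0, R 1, (forall x y, R x -> R y -> R (x - y)) &
      (forall x y, R x -> R y -> R (x * y))].

Definition is_fraction_field : Prop :=
  forall x : K, exists a b, [/\ R a, R b, b != 0 & x = a / b].

Definition Rspan (X : K -> Prop) (z : K) : Prop :=
  exists (m : nat) (r x : 'I_m -> K),
    (forall i, R (r i) /\ X (x i)) /\ z = \sum_(i < m) r i * x i.

Definition is_ideal (J : K -> Prop) : Prop :=
  [/\ (forall x, J x -> R x), J 0, (forall x y, J x -> J y -> J (x + y)) &
      (forall r x, R r -> J x -> J (r * x))].

Definition is_noetherian : Prop :=
  forall J, is_ideal J ->
    exists (m : nat) (g : 'I_m -> K), (forall i, J (g i)) /\
      (forall z, J z <-> Rspan (fun y => exists i, y = g i) z).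

Definition integrally_closed : Prop :=
  forall (x : K) (p : {poly K}), p \is monic -> (forall i, R p`_i) ->
    root p x -> R x.

Definition is_prime_ideal (J : K -> Prop) : Prop :=
  is_ideal J /\ ~ J 1 /\ (forall x y, R x -> R y -> J (x * y) -> J x \/ J y).

Definition dim_le1 : Prop :=
  forall J, is_prime_ideal J -> (exists x, J x /\ x != 0) ->
    forall J', is_ideal J' -> (forall x, J x -> J' x) ->
      (forall x, J' x <-> J x) \/ J' 1.

Definition dedekind : Prop :=
  [/\ is_subring, is_fraction_field, is_noetherian, integrally_closed & dim_le1].

Definition frac_ideal (a : K -> Prop) : Prop :=
  [/\ (exists x, a x /\ x != 0), a 0,
      (forall x y, a x -> a y -> a (x + y)),
      (forall r x, R r -> a x -> a (r * x)) &
      (exists d, [/\ R d, d != 0 & forall x, a x -> R (d * x)])].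

(* a^{-1} and a^{-2} = (a^2)^{-1}. *)
Definition finv (a : K -> Prop) (x : K) : Prop := forall y, a y -> R (x * y).
Definition finv2 (a : K -> Prop) (x : K) : Prop :=
  forall y z, a y -> a z -> R (x * y * z).

Definition bform (e0 e1 e2 e3 : K) : {mpoly K[2]} :=
  e0 *: 'X_0 ^+ 3 + e1 *: ('X_0 ^+ 2 * 'X_1) + e2 *: ('X_0 * 'X_1 ^+ 2)
  + e3 *: 'X_1 ^+ 3.

Definition cubic (a b c d : K) : {mpoly K[2]} := bform a (3 * b) (3 * c) d.

Definition in_V (aa : K -> Prop) (a b c d : K) : Prop :=
  [/\ aa a, R b, finv aa c & finv2 aa d].

Definition disc (a b c d : K) : K :=
  - 3 * b ^+ 2 * c ^+ 2 + 4 * a * c ^+ 3 + 4 * b ^+ 3 * d + a ^+ 2 * d ^+ 2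
  - 6 * a * b * c * d.

Definition in_SL (aa : K -> Prop) (g : 'M[K]_2) : Prop :=
  [/\ R (g 0 0), aa (g 0 1), finv aa (g 1 0), R (g 1 1) & \det g = 1].

Definition act (g : 'M[K]_2) (f : {mpoly K[2]}) : {mpoly K[2]} :=
  (\det g)^-1 *: (f \mPo [tuple g 0 0 *: 'X_0 + g 1 0 *: 'X_1;
                                g 0 1 *: 'X_0 + g 1 1 *: 'X_1]).

Definition has_nontrivial_zero (f : {mpoly K[2]}) : Prop :=
  exists x0 y0 : K, (x0 != 0 \/ y0 != 0) /\
    meval (fun i : 'I_2 => if i == ord0 then x0 else y0) f = 0.

(* An a-oriented quadratic R-algebra is S = R + a xi, with xi^2 = t xi - n,
   t in a^{-1}, n in a^{-2}; the orientation is pi_K(1 /\ xi) = 1.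
   Elements of S (x) K are pairs (u, v) standing for u + v xi. *)
Definition qalg (aa : K -> Prop) (t n : K) : Prop := finv aa t /\ finv2 aa n.
Definition qdisc (t n : K) : K := t ^+ 2 - 4 * n.

Section QA.
Variables t n : K.
Definition qmul (p q : K * K) : K * K :=
  (p.1 * q.1 - n * p.2 * q.2, p.1 * q.2 + p.2 * q.1 + t * p.2 * q.2).
Definition qnorm (p : K * K) : K := p.1 ^+ 2 + t * p.1 * p.2 + n * p.2 ^+ 2.
Definition qconj (p : K * K) : K * K := (p.1 + t * p.2, - p.2).
Definition qinv (p : K * K) : K * K :=
  ((qconj p).1 / qnorm p, (qconj p).2 / qnorm p).
Definition qunit (p : K * K) : Prop := qnorm p != 0.
Definition qcube (p : K * K) : K * K := qmul p (qmul p p).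
(* the orientation  pi_K : /\^2 (S (x) K) -> K *)
Definition qwedge (p q : K * K) : K := p.1 * q.2 - p.2 * q.1.
Definition qadd (p q : K * K) : K * K := (p.1 + q.1, p.2 + q.2).
Definition qscale (k : K) (p : K * K) : K * K := (k * p.1, k * p.2).
End QA.

Definition inS (aa : K -> Prop) (p : K * K) : Prop := R p.1 /\ aa p.2.

Definition frac_ideal_S (aa : K -> Prop) (t n : K) (I : K * K -> Prop) : Prop :=
  [/\ I (0, 0), (forall p q, I p -> I q -> I (qadd p q)),
      (forall s p, inS aa s -> I p -> I (qmul t n s p)),
      (exists k, k != 0 /\ forall p, inS aa p -> I (qscale k p)) &
      (exists k, k != 0 /\ forall p, I p -> inS aa (qscale k p))].

(* apply a K-linear endomorphism of S (x) K, given by its matrix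
   in the basis (1, xi) *)
Definition mapply (M : 'M[K]_2) (p : K * K) : K * K :=
  (M 0 0 * p.1 + M 0 1 * p.2, M 1 0 * p.1 + M 1 1 * p.2).

(* module index [S : I]_R : the R-module generated by the determinants of
   the K-linear maps sending S into I *)
Definition module_index (aa : K -> Prop) (I : K * K -> Prop) (z : K) : Prop :=
  Rspan (fun d => exists M : 'M[K]_2,
            (forall p, inS aa p -> I (mapply M p)) /\ d = \det M) z.

Definition balanced (aa : K -> Prop) (t n : K) (I : K * K -> Prop)
    (delta : K * K) (s : K) : Prop :=
  [/\ qalg aa t n, qdisc t n != 0, frac_ideal_S aa t n I,
      qunit t n delta & s != 0] /\
  [/\
      (forall x y z, I x -> I y -> I z ->
          exists sg, inS aa sg /\ qmul t n x (qmul t n y z) = qmul t n delta sg),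
      (forall z, module_index aa I z <-> exists r, R r /\ z = s * r) &
      s ^+ 3 = qnorm t n delta].

(* C(x,y) = pi_K(1 /\ (alpha x + beta y)^3 delta^{-1}), expanded *)
Definition Phi_form (t n : K) (alpha beta delta : K * K) : {mpoly K[2]} :=
  let di := qinv t n delta in
  let m := qmul t n in
  let c p := qwedge (1, 0) (m p di) in
  bform (c (m alpha (m alpha alpha)))
        (3 * c (m alpha (m alpha beta)))
        (3 * c (m alpha (m beta beta)))
        (c (m beta (m beta beta))).

Definition Phi_is_orbit (aa : K -> Prop) (t n : K) (I : K * K -> Prop)
    (delta : K * K) (s : K) (f : {mpoly K[2]}) : Prop :=
  exists alpha beta : K * K,
    [/\ (forall p, I p <-> exists r a, [/\ R r, aa a &
             p = qadd (qscale r alpha) (qscale a beta)]),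
        qwedge alpha beta = s &
        exists g, in_SL aa g /\ Phi_form t n alpha beta delta = act g f].

End Defs.

(* Main.v *)
Require Import Defs.
From HB Require Import structures.
From mathcomp Require Import all_boot all_order all_algebra.
From mathcomp Require Import mpoly ring.
Import GRing.Theory.
Local Open Scope ring_scope.
Section S.
Variable K : fieldType.

Lemma reduced (t n u v : K) : qdisc t n != 0 -> qcube t n (u, v) = (0, 0) ->
  u = 0 /\ v = 0.
Proof.
move=> hd; rewrite /qcube /qmul /= => [[h1 h2]].
set T := 2 * u + t * v; set M := u ^+ 2 + t * u * v + n * v ^+ 2.
have hM3 : M ^+ 3 = 0.
  have -> : M ^+ 3 = (u * (u * u - n * v * v) - n * v * (u * v + v * u + t * v * v)) ^+ 2
    + t * (u * (u * u - n * v * v) - n * v * (u * v + v * u + t * v * v))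
      * (u * (u * v + v * u + t * v * v) + v * (u * u - n * v * v) + t * v * (u * v + v * u + t * v * v))
    + n * (u * (u * v + v * u + t * v * v) + v * (u * u - n * v * v) + t * v * (u * v + v * u + t * v * v)) ^+ 2
    by rewrite /M; ring.
  by rewrite h1 h2; ring.
have hM : M = 0 by move/eqP: hM3; rewrite expf_eq0 /= => /eqP.
have e1 : (T ^+ 2 - M) * u - T * M = u * (u * u - n * v * v) - n * v * (u * v + v * u + t * v * v)
  by rewrite /T /M; ring.
have e2 : (T ^+ 2 - M) * v = u * (u * v + v * u + t * v * v) + v * (u * u - n * v * v) + t * v * (u * v + v * u + t * v * v)
  by rewrite /T /M; ring.
rewrite h1 hM in e1; rewrite h2 hM in e2.
have eq4 : 4 * M - T ^+ 2 = - qdisc t n * v ^+ 2 by rewrite /T /M /qdisc; ring.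
have [T0|Tn0] := eqVneq T 0.
  have hv : v = 0.
    have h : qdisc t n * v ^+ 2 = 0.
      by rewrite -[qdisc t n * _]opprK -mulNr -eq4 hM T0; ring.
    by move/eqP: h; rewrite mulf_eq0 (negbTE hd) /= expf_eq0 /= => /eqP.
  split=> //; move: hM; rewrite /M hv => /eqP.
  by rewrite !(mul0r, mulr0, expr0n, addr0) /= expf_eq0 /= => /eqP.
have hT2 : T ^+ 2 != 0 by rewrite expf_eq0.
move: e1 e2; rewrite !subr0 !mulr0 subr0 => /eqP e1 /eqP e2.
rewrite mulf_eq0 (negbTE hT2) /= in e1.
rewrite mulf_eq0 (negbTE hT2) /= in e2.
by split; apply/eqP.
Qed.
Definition ev (x y : K) (P : {mpoly K[2]}) := meval (fun i : 'I_2 => if i == ord0 then x else y) P.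
Lemma ev_bform x y e0 e1 e2 e3 : ev x y (bform e0 e1 e2 e3) =
  e0 * x^+3 + e1 * (x^+2 * y) + e2 * (x * y^+2) + e3 * y^+3.
Proof.
rewrite /ev /bform !exprS !expr0 !mevalD !mevalZ !mevalM !meval1 !mevalXU /=; ring.
Qed.
Lemma ev_act (x y : K) g f : ev x y (act g f) =
  (\det g)^-1 * ev (g 0 0 * x + g 1 0 * y) (g 0 1 * x + g 1 1 * y) f.
Proof.
rewrite /ev /act mevalZ comp_mpoly_meval; congr (_ * _); apply: meval_eq => i.
rewrite (tnth_nth 0) /=.
case: i => [[|[|//]] ?] /=; rewrite mevalD !mevalZ !mevalXU //.
Qed.
Lemma ev_Phi (t n : K) (al be de : K * K) (x y : K) : ev x y (Phi_form t n al be de) =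
  (qmul t n (qcube t n (x * al.1 + y * be.1, x * al.2 + y * be.2)) (qinv t n de)).2.
Proof.
rewrite /Phi_form; cbv zeta; rewrite ev_bform /qcube /qwedge.
move: (qinv t n de) => [e1 e2]; case: al => [a1 a2]; case: be => [b1 b2].
rewrite /qmul /=; ring.
Qed.
Lemma qcube_scale (t n c u v : K) : qcube t n (c * u, c * v) =
  (c ^+ 3 * (qcube t n (u, v)).1, c ^+ 3 * (qcube t n (u, v)).2).
Proof. rewrite /qcube /qmul /=; congr pair; ring. Qed.
Lemma qnorm_cube (t n u v : K) : qnorm t n (qcube t n (u, v)) = qnorm t n (u, v) ^+ 3.
Proof. rewrite /qcube /qmul /qnorm /=; ring. Qed.
Lemma qmul_inv (t n : K) (p : K * K) : qnorm t n p != 0 -> qmul t n p (qinv t n p) = (1, 0).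
Proof.
case: p => [p1 p2] hN; rewrite /qmul /qinv /qconj /=.
move: hN; rewrite /qnorm /= => hN.
congr pair; field; exact: hN.
Qed.
Lemma det2 (g : 'M[K]_2) : \det g = g 0 0 * g 1 1 - g 0 1 * g 1 0.
Proof.
rewrite (expand_det_row _ ord0) !big_ord_recl big_ord0 /cofactor !det_mx11 !mxE /=.
have -> : lift (lift ord0 ord0) (0:'I_1) = 0 by apply: val_inj.
have -> : lift ord0 (0:'I_1) = 1 by apply: val_inj.
rewrite /=. ring.
Qed.
Definition Z (P : {mpoly K[2]}) := exists x y : K, (x != 0 \/ y != 0) /\ ev x y P = 0.

Lemma act_zero g f : \det g = 1 -> (Z (act g f) <-> Z f).
Proof.
move=> hdet; have hd := hdet; rewrite det2 in hd.
have mul1r_det : forall z : K, z = z * (g 0 0 * g 1 1 - g 0 1 * g 1 0) by move=> z; rewrite hd mulr1.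
split.
- move=> [x [y [hxy he]]]; rewrite ev_act hdet invr1 mul1r in he.
  exists (g 0 0 * x + g 1 0 * y), (g 0 1 * x + g 1 1 * y); split => //.
  case: (eqVneq (g 0 0 * x + g 1 0 * y) 0) => h1; last by left.
  case: (eqVneq (g 0 1 * x + g 1 1 * y) 0) => h2; last by right.
  exfalso; case: hxy => /eqP []; apply/eqP.
  + have -> : x = g 1 1 * (g 0 0 * x + g 1 0 * y) - g 1 0 * (g 0 1 * x + g 1 1 * y).
      by rewrite {1}(mul1r_det x); ring.
    by rewrite h1 h2 !mulr0 ?subr0 ?addr0.
  + have -> : y = g 0 0 * (g 0 1 * x + g 1 1 * y) - g 0 1 * (g 0 0 * x + g 1 0 * y).
      by rewrite {1}(mul1r_det y); ring.
    by rewrite h1 h2 !mulr0 ?subr0 ?addr0.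
- move=> [x0 [y0 [hxy he]]].
  exists (x0 * g 1 1 - y0 * g 1 0), (- x0 * g 0 1 + y0 * g 0 0); split.
    case: (eqVneq (x0 * g 1 1 - y0 * g 1 0) 0) => h1; last by left.
    case: (eqVneq (- x0 * g 0 1 + y0 * g 0 0) 0) => h2; last by right.
    exfalso; case: hxy => /eqP []; apply/eqP.
    + have -> : x0 = g 0 0 * (x0 * g 1 1 - y0 * g 1 0) + g 1 0 * (- x0 * g 0 1 + y0 * g 0 0).
        by rewrite {1}(mul1r_det x0); ring.
      by rewrite h1 h2 !mulr0 ?subr0 ?addr0.
    + have -> : y0 = g 0 1 * (x0 * g 1 1 - y0 * g 1 0) + g 1 1 * (- x0 * g 0 1 + y0 * g 0 0).
        by rewrite {1}(mul1r_det y0); ring.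
      by rewrite h1 h2 !mulr0 ?subr0 ?addr0.
  rewrite ev_act hdet invr1 mul1r.
  have -> : g 0 0 * (x0 * g 1 1 - y0 * g 1 0) + g 1 0 * (- x0 * g 0 1 + y0 * g 0 0) = x0.
    by apply: esym; rewrite {1}(mul1r_det x0); ring.
  have -> : g 0 1 * (x0 * g 1 1 - y0 * g 1 0) + g 1 1 * (- x0 * g 0 1 + y0 * g 0 0) = y0.
    by apply: esym; rewrite {1}(mul1r_det y0); ring.
  exact: he.
Qed.
Lemma crit (t n : K) (al be de : K * K) (s : K) :
  qdisc t n != 0 -> qunit t n de -> s != 0 -> s ^+ 3 = qnorm t n de ->
  qwedge al be = s ->
  (Z (Phi_form t n al be de) <-> exists gamma, qunit t n gamma /\ de = qcube t n gamma).
Proof.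
case: al => [a1 a2]; case: be => [b1 b2]; case: de => [d1 d2].
rewrite /qunit /qwedge /= => hdisc hN hs hs3 hw; subst s.
split.
- move=> [x [y [hxy he]]]; rewrite ev_Phi in he.
  set u := x * a1 + y * b1 in he; set v := x * a2 + y * b2 in he.
  set P := qcube _ _ _ in he.
  have hP : qcube t n (u, v) = (P.1, P.2) by rewrite /P; case: (qcube _ _ _).
  clearbody P; case: P hP he => p1 p2 /= hP he.
  move: he; rewrite /qmul /qinv /qconj /= => he.
  set N := qnorm t n (d1, d2) in hN he hs3.
  have k2 : p2 * d1 - p1 * d2 = 0.
    rewrite -[LHS]mulr1 -(divff hN) -[RHS](mulr0 N) -he; field; exact: hN.
  pose k := (p1 * (d1 + t * d2) + n * p2 * d2) / N.
  have hp1 : p1 = k * d1.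
    have e : p1 * N = (p1 * (d1 + t * d2) + n * p2 * d2) * d1 - n * (p2 * d1 - p1 * d2) * d2
      by rewrite /N /qnorm /=; ring.
    rewrite k2 mulr0 mul0r subr0 in e.
    by rewrite /k; apply: (mulIf hN); rewrite e; field.
  have hp2 : p2 = k * d2.
    have e : p2 * N = (p1 * (d1 + t * d2) + n * p2 * d2) * d2 + (p2 * d1 - p1 * d2) * d1
             + t * (p2 * d1 - p1 * d2) * d2
      by rewrite /N /qnorm /=; ring.
    rewrite k2 !mulr0 mul0r !addr0 in e.
    by rewrite /k; apply: (mulIf hN); rewrite e; field.
  have hk : k != 0.
    apply/eqP => k0; rewrite k0 !mul0r in hp1 hp2; subst p1 p2.
    have [u0 v0] := @reduced t n u v hdisc hP.
    case: hxy => /eqP []; apply/eqP.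
    + have hx : x * (a1 * b2 - a2 * b1) = u * b2 - v * b1 by rewrite /u /v; ring.
      rewrite u0 v0 !mul0r subr0 in hx.
      by move/eqP: hx; rewrite mulf_eq0 (negbTE hs) orbF.
    + have hy : y * (a1 * b2 - a2 * b1) = a1 * v - a2 * u by rewrite /u /v; ring.
      rewrite u0 v0 !mulr0 subr0 in hy.
      by move/eqP: hy; rewrite mulf_eq0 (negbTE hs) orbF.
  set s := a1 * b2 - a2 * b1 in hs hs3.
  set M := qnorm t n (u, v).
  have hM3 : M ^+ 3 = k ^+ 2 * s ^+ 3.
    have e : qnorm t n (p1, p2) = M ^+ 3 by rewrite -hP qnorm_cube.
    rewrite -e hp1 hp2 hs3 /N /qnorm /=; ring.
  pose m := M / s.
  have hm3 : m ^+ 3 = k ^+ 2.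
    rewrite /m exprMn hM3 exprVn; by field; rewrite ?expf_eq0.
  have hm : m != 0.
    apply/eqP => m0; move/eqP: hk; apply.
    have : k ^+ 2 == 0 by rewrite -hm3 m0 expr0n.
    by rewrite expf_eq0 => /andP [_ /eqP].
  exists (m / k * u, m / k * v); split.
    have -> : qnorm t n (m / k * u, m / k * v) = (m / k) ^+ 2 * M by rewrite /M /qnorm /=; ring.
    have -> : M = m * s by rewrite /m; field.
    by apply: mulf_neq0; [apply: expf_neq0; apply: mulf_neq0; rewrite ?invr_eq0 | apply: mulf_neq0].
  rewrite qcube_scale hP /= hp1 hp2; congr pair.
  + rewrite exprMn hm3 exprVn; by field; rewrite ?expf_eq0.
  + rewrite exprMn hm3 exprVn; by field; rewrite ?expf_eq0.
- move=> [[g1 g2] [hg hde]].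
  set s := a1 * b2 - a2 * b1 in hs hs3.
  exists ((g1 * b2 - g2 * b1) / s), ((a1 * g2 - a2 * g1) / s); split.
    case: (eqVneq ((g1 * b2 - g2 * b1) / s) 0) => h1; last by left.
    case: (eqVneq ((a1 * g2 - a2 * g1) / s) 0) => h2; last by right.
    exfalso; move/eqP: hg; apply.
    have e1 : g1 = a1 * ((g1 * b2 - g2 * b1) / s) + b1 * ((a1 * g2 - a2 * g1) / s).
      by rewrite /s; field.
    have e2 : g2 = a2 * ((g1 * b2 - g2 * b1) / s) + b2 * ((a1 * g2 - a2 * g1) / s).
      by rewrite /s; field.
    rewrite h1 h2 !mulr0 addr0 in e1 e2.
    by rewrite /qnorm e1 e2 /=; ring.
  rewrite ev_Phi.
  have -> : ((g1 * b2 - g2 * b1) / s * a1 + (a1 * g2 - a2 * g1) / s * b1,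
             (g1 * b2 - g2 * b1) / s * a2 + (a1 * g2 - a2 * g1) / s * b2) = (g1, g2).
    by congr pair; rewrite /s; field.
  rewrite hde qmul_inv //.
  case: (qcube t n (g1, g2)) (qnorm_cube t n g1 g2) => [q1 q2] ->.
  by rewrite expf_eq0.
Qed.
End S.

Theorem mainTheorem7 (K : fieldType) (R : K -> Prop) (aa : K -> Prop)
    (a b c d : K) (t n : K) (I : K * K -> Prop) (delta : K * K) (s : K) :
  dedekind R -> (3 : K) != 0 -> frac_ideal R aa ->
  in_V R aa a b c d -> disc a b c d != 0 ->
  balanced R aa t n I delta s ->
  Phi_is_orbit R aa t n I delta s (cubic a b c d) ->
  (has_nontrivial_zero (cubic a b c d) <->
   exists gamma : K * K, qunit t n gamma /\ delta = qcube t n gamma).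
Proof.
move=> _ _ _ _ _ [[_ hd _ hu hs] [_ _ hs3]] [al [be [_ hw [g [[_ _ _ _ hdet] hPhi]]]]].
have := @crit K t n al be delta s hd hu hs hs3 hw.
rewrite hPhi (@act_zero K g (cubic a b c d) hdet).
by [].
Qed.
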